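(* Let $a\le s\le r$ be positive integers with $s\mid r$, and let $\gamma\in B_a$ (viewed in $B_s\subseteq B_r$ via the standard inclusions). Then $\widehat{\gamma[1,r]^s}=\widehat{\gamma[1,s]^r}$, where the left closure is taken in $B_r$ and the right in $B_s$. Consequently, for a T-link with $r_{k-1}\le s_k\le r_k$ and $s_k\mid r_k$, $$T((r_1,s_1),\dots,(r_{k-1},s_{k-1}),(r_k,s_k))=T((r_1,s_1),\dots,(r_{k-1},s_{k-1}),(s_k,r_k)).$$
   Context: $B_n$ is the braid group on $n$ strands with generators $\sigma_1,\dots,\sigma_{n-1}$; $\widehat\beta$ is the closure; $[1,n]=\sigma_1\sigma_2\cdots\sigma_{n-1}$. A T-link $T((r_1,s_1),\dots,(r_k,s_k))$, with integers $2\le r_1\le\dots\le r_k$ and $s_i>0$, is the closure of $[1,r_1]^{s_1}\cdots[1,r_k]^{s_k}\in B_{r_k}$. *)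

(* Defs.v *)
From mathcomp Require Import all_boot.
Set Implicit Arguments. Unset Strict Implicit. Unset Printing Implicit Defensive.

(* A letter (i, true) is sigma_i, (i, false) is sigma_i^{-1}; i >= 1. *)
Definition letter := (nat * bool)%type.
Definition bword := seq letter.

Definition valid (n : nat) (w : bword) : bool :=
  all (fun x : letter => (0 < x.1) && (x.1 < n)) w.

Inductive braid_rel : bword -> bword -> Prop :=
| br_cancel i b : braid_rel [:: (i, b); (i, ~~ b)] [::]
| br_far i j : (i.+1 < j)%N ->
    braid_rel [:: (i, true); (j, true)] [:: (j, true); (i, true)]
| br_braid i :
    braid_rel [:: (i, true); (i.+1, true); (i, true)]
              [:: (i.+1, true); (i, true); (i.+1, true)].

(* markov n w m v : the closure of w in B_n and the closure of v in B_m are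
   the same link (equivalence generated by equality in B_n, conjugation,
   and Markov (de)stabilisation B_n -> B_{n+1}, beta |-> beta sigma_n^{+-1}). *)
Inductive markov : nat -> bword -> nat -> bword -> Prop :=
| mk_refl n w : markov n w n w
| mk_sym n w m v : markov n w m v -> markov m v n w
| mk_trans n w m v p u : markov n w m v -> markov m v p u -> markov n w p u
| mk_rel n u v l r : braid_rel l r ->
    valid n (u ++ l ++ v) -> valid n (u ++ r ++ v) ->
    markov n (u ++ l ++ v) n (u ++ r ++ v)
| mk_conj n u v : valid n (u ++ v) -> markov n (u ++ v) n (v ++ u)
| mk_stab n w b : (0 < n)%N -> valid n w -> markov n w n.+1 (rcons w (n, b)).

(* [1,n] = sigma_1 sigma_2 ... sigma_{n-1} *)
Definition seg (n : nat) : bword := [seq (i, true) | i <- iota 1 n.-1].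

Definition bpow (w : bword) (k : nat) : bword := flatten (nseq k w).

Definition Tword (L : seq (nat * nat)) : bword :=
  flatten [seq bpow (seg p.1) p.2 | p <- L].

Definition Tdata (L : seq (nat * nat)) : bool :=
  [&& L != [::], sorted leq [seq p.1 | p <- L]
    & all (fun p : nat * nat => (2 <= p.1)%N && (0 < p.2)%N) L].

(* T((r_1,s_1),...,(r_k,s_k)) is the closure of Tword L in B_{r_k};
   T-link equality is stated via markov with r_k strands. *)
Definition Tstrands (L : seq (nat * nat)) : nat := last 0%N [seq p.1 | p <- L].

(* Main.v *)
Require Import Defs.
From mathcomp Require Import all_boot.
From mathcomp Require Import zify.
Set Implicit Arguments. Unset Strict Implicit. Unset Printing Implicit Defensive.

Definition asc (a k : nat) : bword := [seq (i, true) | i <- iota a k].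
Definition desc (a k : nat) : bword := rev (asc a k).
Definition sh (k : nat) (w : bword) : bword := [seq (x.1 + k, x.2) | x <- w].
Definition inb (lo hi : nat) (w : bword) : bool :=
  all (fun x : letter => (lo <= x.1) && (x.1 <= hi)) w.
Definition posw (w : bword) : bool := all (fun x : letter => x.2) w.

Lemma seg_asc n : seg n = asc 1 n.-1. Proof. by []. Qed.

Lemma asc_add a m k : asc a (m + k) = asc a m ++ asc (a + m) k.
Proof. by rewrite /asc iotaD map_cat. Qed.

Lemma ascSr a k : asc a k.+1 = rcons (asc a k) (a + k, true).
Proof. by rewrite -addn1 asc_add -cats1. Qed.

Lemma descS a k : desc a k.+1 = (a + k, true) :: desc a k.
Proof. by rewrite /desc ascSr rev_rcons. Qed.

Lemma bpowS w k : bpow w k.+1 = w ++ bpow w k. Proof. by []. Qed.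
Lemma bpow0 w : bpow w 0 = [::]. Proof. by []. Qed.
Lemma bpowSr w k : bpow w k.+1 = bpow w k ++ w.
Proof. elim: k => [|k IH]; first by rewrite /bpow /= cats0. rewrite [LHS]bpowS {1}IH. by rewrite catA. Qed.
Lemma bpow_add w m k : bpow w (m + k) = bpow w m ++ bpow w k.
Proof. elim: m => [|m IH] //. by rewrite addSn !bpowS IH catA. Qed.
Lemma rev_bpow w k : rev (bpow w k) = bpow (rev w) k.
Proof. elim: k => [|k IH] //. by rewrite bpowS rev_cat IH bpowSr. Qed.

Lemma sh_cat k u v : sh k (u ++ v) = sh k u ++ sh k v. Proof. exact: map_cat. Qed.
Lemma sh_sh a b w : sh a (sh b w) = sh (b + a) w.
Proof. elim: w => [|x w IH] //=. by rewrite IH addnA. Qed.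
Lemma sh_bpow k w m : sh k (bpow w m) = bpow (sh k w) m.
Proof. elim: m => [|m IH] //. by rewrite !bpowS sh_cat IH. Qed.
Lemma sh_asc k a m : sh k (asc a m) = asc (a + k) m.
Proof. elim: m a => [|m IH] a //=. by rewrite IH addSn. Qed.
Lemma sh_desc k a m : sh k (desc a m) = desc (a + k) m.
Proof. by rewrite /desc /sh map_rev -sh_asc. Qed.

Lemma valid_cat n u v : valid n (u ++ v) = valid n u && valid n v.
Proof. exact: all_cat. Qed.
Lemma valid_mono n n' w : n <= n' -> valid n w -> valid n' w.
Proof. move=> le; apply: sub_all => x /andP[-> /=] h; lia. Qed.
Lemma valid_inb n lo hi w : 0 < lo -> hi < n -> inb lo hi w -> valid n w.
Proof. move=> h1 h2; apply: sub_all => x /andP[a b]; apply/andP; lia. Qed.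
Lemma inb_asc a k : inb a (a + k).-1 (asc a k).
Proof. apply/allP => x /mapP[i]; rewrite mem_iota => /andP[h1 h2] -> /=; apply/andP; lia. Qed.
Lemma inb_desc a k : inb a (a + k).-1 (desc a k).
Proof. rewrite /inb /desc all_rev. exact: inb_asc. Qed.
Lemma valid_asc n a k : 0 < a -> a + k <= n -> valid n (asc a k).
Proof. move=> h1 h2; apply: (valid_inb (lo:=a) (hi:=(a+k).-1)) => //; first lia. exact: inb_asc. Qed.

Lemma valid_desc n a k : 0 < a -> a + k <= n -> valid n (desc a k).
Proof. by move=> h1 h2; rewrite /valid /desc all_rev; apply: valid_asc. Qed.
Lemma valid_bpow n w k : valid n w -> valid n (bpow w k).
Proof. move=> h; elim: k => [|k IH] //; by rewrite bpowS valid_cat h IH. Qed.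
Lemma valid_rev n w : valid n (rev w) = valid n w.
Proof. exact: all_rev. Qed.

Inductive beq (n : nat) : bword -> bword -> Prop :=
| be_refl w : valid n w -> beq n w w
| be_sym w v : beq n w v -> beq n v w
| be_trans w v u : beq n w v -> beq n v u -> beq n w u
| be_rel u l r v : braid_rel l r -> valid n (u ++ l ++ v) ->
    valid n (u ++ r ++ v) -> beq n (u ++ l ++ v) (u ++ r ++ v).

Lemma beq_valid n w v : beq n w v -> valid n w /\ valid n v.
Proof. elim=> //; clear; try tauto. Qed.

Lemma beq_markov n w v : beq n w v -> markov n w n v.
Proof.
elim=> {w v}.
- move=> w _; exact: mk_refl.
- move=> w v _ h; exact: mk_sym.
- move=> w v u _ h1 _ h2; exact: mk_trans h1 h2.
- move=> u l r v hr h1 h2; exact: mk_rel.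
Qed.

Lemma beq_ctx n w v x y : beq n w v -> valid n x -> valid n y ->
  beq n (x ++ w ++ y) (x ++ v ++ y).
Proof.
move=> h hx hy; elim: h => {w v}.
- move=> w hw; apply: be_refl; by rewrite !valid_cat hx hw hy.
- move=> w v _ h; exact: be_sym.
- move=> w v u _ h1 _ h2; exact: be_trans h1 h2.
- move=> u l r v hr h1 h2.
  have e : forall z, x ++ (u ++ z ++ v) ++ y = (x ++ u) ++ z ++ (v ++ y).
    by move=> z; rewrite -!catA.
  rewrite !e; apply: be_rel => //; rewrite !valid_cat in h1 h2 *; rewrite hx hy.
  - by case/and3P: h1 => -> -> ->.
  - by case/and3P: h2 => -> -> ->.
Qed.

Lemma beq_l n w v x : beq n w v -> valid n x -> beq n (x ++ w) (x ++ v).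
Proof. move=> h hx; have := beq_ctx h hx (isT : valid n [::]); by rewrite !cats0. Qed.
Lemma beq_r n w v y : beq n w v -> valid n y -> beq n (w ++ y) (v ++ y).
Proof. move=> h hy; exact: (beq_ctx (x:=[::]) h isT hy). Qed.
Lemma beq_cat n w1 v1 w2 v2 : beq n w1 v1 -> beq n w2 v2 ->
  beq n (w1 ++ w2) (v1 ++ v2).
Proof.
move=> h1 h2; have [a1 b1] := beq_valid h1; have [a2 b2] := beq_valid h2.
apply: be_trans (beq_r h1 a2) (beq_l h2 b1).
Qed.

Lemma beq_mono n n' w v : n <= n' -> beq n w v -> beq n' w v.
Proof.
move=> le; elim=> {w v}.
- move=> w hw; apply: be_refl; exact: valid_mono hw.
- move=> w v _ h; exact: be_sym.
- move=> w v u _ h1 _ h2; exact: be_trans h1 h2.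
- move=> u l r v hr h1 h2; apply: be_rel => //; [exact: valid_mono h1 | exact: valid_mono h2].
Qed.

Lemma rel_rev l r : braid_rel l r ->
  braid_rel (rev l) (rev r) \/ braid_rel (rev r) (rev l).
Proof.
case=> [i b|i j h|i] /=.
- left; rewrite /rev /=. have := br_cancel i (~~ b); by rewrite negbK.
- right; exact: br_far.
- left; exact: br_braid.
Qed.

Lemma beq_rev n w v : beq n w v -> beq n (rev w) (rev v).
Proof.
elim=> {w v}.
- move=> w hw; apply: be_refl; by rewrite valid_rev.
- move=> w v _ h; exact: be_sym.
- move=> w v u _ h1 _ h2; exact: be_trans h1 h2.
- move=> u l r v hr h1 h2; rewrite !rev_cat -!catA.
  have h1' : valid n (rev v ++ rev l ++ rev u) by rewrite -rev_cat -rev_cat valid_rev -catA.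
  have h2' : valid n (rev v ++ rev r ++ rev u) by rewrite -rev_cat -rev_cat valid_rev -catA.
  case: (rel_rev hr) => h; first exact: be_rel.
  apply: be_sym; exact: be_rel.
Qed.

Lemma be_rel0 n l r : braid_rel l r -> valid n l -> valid n r -> beq n l r.
Proof.
move=> h h1 h2; have := @be_rel n [::] l r [::] h; rewrite /= !cats0; exact.
Qed.

Definition farn (i j : nat) : bool := (i.+1 < j) || (j.+1 < i).

Lemma farnC i j : farn i j = farn j i. Proof. by rewrite /farn orbC. Qed.

Lemma comm_pp n i j : farn i j -> 0 < i < n -> 0 < j < n ->
  beq n [:: (i, true); (j, true)] [:: (j, true); (i, true)].
Proof.
move=> f hi hj; have v1 : valid n [:: (i, true); (j, true)] by rewrite /valid /= hi hj.
have v2 : valid n [:: (j, true); (i, true)] by rewrite /valid /= hi hj.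
case/orP: f => f.
- exact: be_rel0 (br_far f) v1 v2.
- apply: be_sym; exact: be_rel0 (br_far f) v2 v1.
Qed.

Lemma comm_lp n i b j : farn i j -> 0 < i < n -> 0 < j < n ->
  beq n [:: (i, b); (j, true)] [:: (j, true); (i, b)].
Proof.
move=> f hi hj; case: b; first exact: comm_pp.
have f' : farn j i by rewrite farnC.
have vv : forall bb cc, valid n [:: (i, bb); (j, cc)] by move=> bb cc; rewrite /valid /= hi hj.
have e1 : beq n [:: (i, false); (j, true); (i, true); (i, false)] [:: (i, false); (j, true)].
  have := @be_rel n [:: (i, false); (j, true)] _ _ [::] (br_cancel i true).
  rewrite /= ?cats0; apply; rewrite /valid /= ?hi ?hj //.
have e2 : beq n [:: (i, false); (j, true); (i, true); (i, false)]
               [:: (i, false); (i, true); (j, true); (i, false)].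
  have := @beq_ctx n _ _ [:: (i, false)] [:: (i, false)] (comm_pp (f' : farn j i) hj hi).
  rewrite /=; apply; rewrite /valid /= ?hi //.
have e3 : beq n [:: (i, false); (i, true); (j, true); (i, false)] [:: (j, true); (i, false)].
  have := @be_rel n [::] _ _ [:: (j, true); (i, false)] (br_cancel i false).
  rewrite /=; apply; rewrite /valid /= ?hi ?hj //.
apply: be_trans (be_sym e1) (be_trans e2 e3).
Qed.

Lemma comm_ll n i b j c : farn i j -> 0 < i < n -> 0 < j < n ->
  beq n [:: (i, b); (j, c)] [:: (j, c); (i, b)].
Proof.
move=> f hi hj; case: c; first exact: comm_lp.
have f' : farn j i by rewrite farnC.
have e1 : beq n [:: (j, false); (j, true); (i, b); (j, false)] [:: (i, b); (j, false)].
  have := @be_rel n [::] _ _ [:: (i, b); (j, false)] (br_cancel j false).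
  rewrite /= ?cats0; apply; rewrite /valid /= ?hi ?hj //.
have e2 : beq n [:: (j, false); (j, true); (i, b); (j, false)]
               [:: (j, false); (i, b); (j, true); (j, false)].
  have := @beq_ctx n _ _ [:: (j, false)] [:: (j, false)] (be_sym (comm_lp b f hi hj)).
  rewrite /=; apply; rewrite /valid /= ?hj //.
have e3 : beq n [:: (j, false); (i, b); (j, true); (j, false)] [:: (j, false); (i, b)].
  have := @be_rel n [:: (j, false); (i, b)] _ _ [::] (br_cancel j true).
  rewrite /= ?cats0; apply; rewrite /valid /= ?hi ?hj //.
apply: be_trans (be_sym e1) (be_trans e2 e3).
Qed.

Lemma comm_lw n x v : valid n (x :: v) -> all (fun y : letter => farn x.1 y.1) v ->
  beq n (x :: v) (rcons v x).
Proof.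
case: x => i b; elim: v => [|[j c] v IH] hv hf.
  by apply: be_refl.
move: hv hf; rewrite /valid /= => /and3P[hi hj hv] /andP[f hf].
have e1 : beq n ((i, b) :: (j, c) :: v) ((j, c) :: (i, b) :: v).
  have := @beq_ctx n _ _ [::] v (comm_ll b c f hi hj); apply => //.
apply: be_trans e1 _.
have := @beq_l n _ _ [:: (j, c)] (IH _ hf); apply; rewrite /valid /= ?hi ?hj //.
Qed.

Lemma comm_ww n w v : valid n w -> valid n v ->
  all (fun x : letter => all (fun y : letter => farn x.1 y.1) v) w ->
  beq n (w ++ v) (v ++ w).
Proof.
elim: w => [|x w IH] hw hv hf /=.
  by rewrite cats0; apply: be_refl.
move: hw hf; rewrite /valid /= => /andP[hx hw] /andP[fx hf].
have e1 : beq n (x :: w ++ v) (x :: v ++ w).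
  have := @beq_l n _ _ [:: x] (IH hw hv hf); apply; rewrite /valid /= hx //.
apply: be_trans e1 _.
have e2 := @comm_lw n x v.
have e3 : beq n (x :: v ++ w) (rcons v x ++ w).
  have := beq_r (e2 _ fx) hw; apply; rewrite /valid /= hx //.
by rewrite cat_rcons in e3.
Qed.

Lemma far_inb lo1 hi1 lo2 hi2 w v : inb lo1 hi1 w -> inb lo2 hi2 v ->
  (hi1.+1 < lo2) || (hi2.+1 < lo1) ->
  all (fun x : letter => all (fun y : letter => farn x.1 y.1) v) w.
Proof.
move=> hw hv h; apply/allP => x /(allP hw) /andP[x1 x2].
apply/allP => y /(allP hv) /andP[y1 y2]; rewrite /farn; apply/orP.
case/orP: h => h; [left|right]; lia.
Qed.

Lemma S1 n b L j : 0 < b -> b <= j -> j < b + L -> b + L < n ->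
  beq n (asc b L.+1 ++ [:: (j, true)]) ((j.+1, true) :: asc b L.+1).
Proof.
move=> hb h1 h2 hn.
set m := b + L - j - 1.
have eL : L.+1 = (j - b) + m.+2 by rewrite /m; lia.
have ej : b + (j - b) = j by lia.
rewrite eL asc_add ej.
have -> : asc j m.+2 = (j, true) :: (j.+1, true) :: asc j.+2 m by [].
set A := asc b (j - b); set B := asc j.+2 m.
have iA : inb b j.-1 A by have := inb_asc b (j - b); rewrite ej.
have iB : inb j.+2 (j.+2 + m).-1 B by exact: inb_asc.
have vA : valid n A by apply: valid_inb iA; lia.
have vB : valid n B by apply: valid_inb iB; rewrite /m; lia.
have vj : valid n [:: (j, true)] by rewrite /valid /=; lia.
have vj1 : valid n [:: (j.+1, true)] by rewrite /valid /=; lia.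
have vjj : valid n [:: (j, true); (j.+1, true)] by rewrite /valid /=; lia.
have ij : inb j j [:: (j, true)] by rewrite /inb /= leqnn.
have ij1 : inb j.+1 j.+1 [:: (j.+1, true)] by rewrite /inb /= leqnn.
have e1 : beq n (A ++ [:: (j, true); (j.+1, true)] ++ (B ++ [:: (j, true)]))
                (A ++ [:: (j, true); (j.+1, true)] ++ ([:: (j, true)] ++ B)).
  apply: beq_l => //; apply: beq_l => //; apply: comm_ww => //.
  apply: far_inb iB ij _; apply/orP; right; lia.
have e2 : beq n (A ++ [:: (j, true); (j.+1, true); (j, true)] ++ B)
                (A ++ [:: (j.+1, true); (j, true); (j.+1, true)] ++ B).
  apply: be_rel; first exact: br_braid.
  - rewrite !valid_cat vA vB /= andbT /valid /=; lia.
  - rewrite !valid_cat vA vB /= andbT /valid /=; lia.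
have e3 : beq n ((A ++ [:: (j.+1, true)]) ++ [:: (j, true); (j.+1, true)] ++ B)
                (([:: (j.+1, true)] ++ A) ++ [:: (j, true); (j.+1, true)] ++ B).
  apply: beq_r; last by rewrite valid_cat vjj vB.
  apply: comm_ww => //; apply: far_inb iA ij1 _; apply/orP; left; lia.
rewrite -!catA /= in e1 e2 e3 *.
exact: be_trans e1 (be_trans e2 e3).
Qed.

Lemma sh0 w : sh 0 w = w.
Proof. elim: w => [|[i b] w IH] //=. by rewrite addn0 IH. Qed.
Lemma posw_cat u v : posw (u ++ v) = posw u && posw v. Proof. exact: all_cat. Qed.
Lemma posw_sh k w : posw (sh k w) = posw w.
Proof. by rewrite /posw /sh all_map. Qed.

Lemma Sw n b L Y : 0 < b -> b + L < n -> posw Y ->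
  all (fun x : letter => (b <= x.1) && (x.1 < b + L)) Y ->
  beq n (asc b L.+1 ++ Y) (sh 1 Y ++ asc b L.+1).
Proof.
move=> hb hn; have va : valid n (asc b L.+1) by apply: valid_asc => //; lia.
elim: Y => [|[j c] Y IH] /=.
  by move=> _ _; rewrite cats0; apply: be_refl.
move=> /andP[-> pY] /andP[/andP[h1 h2] hY].
have vY : valid n Y.
  apply: sub_all hY => x /andP[a b']; apply/andP; lia.
have e1 : beq n ((asc b L.+1 ++ [:: (j, true)]) ++ Y) (((j.+1, true) :: asc b L.+1) ++ Y).
  apply: beq_r vY; exact: S1.
rewrite -catA /= in e1; apply: be_trans e1 _; rewrite addn1.
have := @beq_l n _ _ [:: (j.+1, true)] (IH pY hY); apply.
by rewrite /valid /=; lia.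
Qed.

Lemma Sp n b L Y k : 0 < b -> b + L < n -> posw Y ->
  all (fun x : letter => (b <= x.1) && (x.1 + k <= b + L)) Y ->
  beq n (bpow (asc b L.+1) k ++ Y) (sh k Y ++ bpow (asc b L.+1) k).
Proof.
move=> hb hn pY; have va : valid n (asc b L.+1) by apply: valid_asc => //; lia.
elim: k => [|k IH] hY.
  rewrite sh0 bpow0 cats0 /=; apply: be_refl.
  apply: sub_all hY => x /andP[a b']; apply/andP; lia.
have hY' : all (fun x : letter => (b <= x.1) && (x.1 + k <= b + L)) Y.
  apply: sub_all hY => x /andP[a b']; apply/andP; lia.
have vb : valid n (bpow (asc b L.+1) k) by apply: valid_bpow.
rewrite bpowS -catA; apply: be_trans (beq_l (IH hY') va) _.
rewrite !catA; apply: beq_r vb.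
have := @Sw n b L (sh k Y) hb hn; rewrite sh_sh addn1; apply; first by rewrite posw_sh.
rewrite /sh all_map; apply: sub_all hY => x /andP[a b'] /=; apply/andP; lia.
Qed.

Lemma Q p : beq p.+3 ((p.+2, true) :: seg p.+2 ++ [:: (p.+2, true)])
                     (seg p.+2 ++ [:: (p.+2, true); (p.+1, true)]).
Proof.
have -> : seg p.+2 = rcons (asc 1 p) (p.+1, true) by rewrite seg_asc ascSr add1n.
set A := asc 1 p.
have iA : inb 1 p A by have := inb_asc 1 p; rewrite add1n.
have vA : valid p.+3 A by apply: valid_inb iA => //; lia.
have e1 : beq p.+3 (([:: (p.+2, true)] ++ A) ++ [:: (p.+1, true); (p.+2, true)])
                   ((A ++ [:: (p.+2, true)]) ++ [:: (p.+1, true); (p.+2, true)]).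
  apply: beq_r; last by rewrite /valid /=; lia.
  apply: comm_ww => //; first by rewrite /valid /=; lia.
  apply: (@far_inb p.+2 p.+2 1 p) => //; by rewrite /inb /= leqnn.
have e2 : beq p.+3 (A ++ [:: (p.+2, true); (p.+1, true); (p.+2, true)] ++ [::])
                   (A ++ [:: (p.+1, true); (p.+2, true); (p.+1, true)] ++ [::]).
  apply: be_sym; apply: be_rel; first exact: br_braid.
  - by rewrite !valid_cat vA /valid /=; lia.
  - by rewrite !valid_cat vA /valid /=; lia.
rewrite cats0 in e2; rewrite -!catA /= in e1 e2.
rewrite -cats1 -!catA /=; exact: be_trans e1 e2.
Qed.

Lemma posw_asc a k : posw (asc a k).
Proof. by rewrite /posw /asc all_map; apply/allP. Qed.
Lemma posw_desc a k : posw (desc a k).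
Proof. rewrite /posw /desc all_rev; exact: posw_asc. Qed.
Lemma posw_bpow w k : posw w -> posw (bpow w k).
Proof. move=> h; elim: k => [|k IH] //; by rewrite bpowS posw_cat h IH. Qed.

Lemma K a k : 0 < a ->
  beq (a + k).+1 (desc a.+1 k ++ seg (a + k) ++ [:: (a + k, true)])
                 (seg (a + k) ++ desc a k.+1).
Proof.
move=> ha; case: k => [|k].
  rewrite /= descS addn0 /= ?cats0; apply: be_refl.
  rewrite valid_cat /valid /= andbT; apply/andP; split; last lia.
  rewrite seg_asc; apply: valid_asc => //; lia.
case: a ha => // a' _.
set p := a' + k.
have eM : a'.+1 + k.+1 = p.+2 by rewrite /p; lia.
rewrite eM !descS.
have e1 : a'.+2 + k = p.+2 by rewrite /p; lia.
have e2 : a'.+1 + k.+1 = p.+2 by rewrite /p; lia.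
have e3 : a'.+1 + k = p.+1 by rewrite /p; lia.
rewrite e1 e2 e3 -[a'.+2]addn1 -sh_desc.
set Y := desc a'.+1 k.
have iY : inb a'.+1 (a'.+1 + k).-1 Y by exact: inb_desc.
have vY : valid p.+3 Y by apply: valid_inb iY => //; rewrite /p; lia.
have pY : posw Y by exact: posw_desc.
have vS : valid p.+3 [:: (p.+2, true)] by rewrite /valid /=; lia.
have vseg : valid p.+3 (seg p.+2) by rewrite seg_asc; apply: valid_asc => //; lia.
have f1 : beq p.+3 ([:: (p.+2, true)] ++ (sh 1 Y ++ seg p.+2) ++ [:: (p.+2, true)])
                   ([:: (p.+2, true)] ++ (seg p.+2 ++ Y) ++ [:: (p.+2, true)]).
  apply: beq_ctx => //; apply: be_sym.
  have := @Sw p.+3 1 p Y isT _ pY; apply; first lia.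
  apply: sub_all iY => x /andP[h1 h2]; apply/andP; rewrite /p; lia.
have f2 : beq p.+3 (((p.+2, true) :: seg p.+2) ++ (Y ++ [:: (p.+2, true)]))
                   (((p.+2, true) :: seg p.+2) ++ ([:: (p.+2, true)] ++ Y)).
  apply: beq_l; last by rewrite -cat1s valid_cat vseg andbT /valid /=; lia.
  apply: comm_ww => //; apply: far_inb iY (_ : inb p.+2 p.+2 _) _.
    by rewrite /inb /= leqnn.
  apply/orP; left; rewrite /p; lia.
have f3 := beq_r (Q p) vY.
rewrite -!catA /= in f1 f2 f3; rewrite /=.
rewrite -!catA /= in f3. exact: be_trans f1 (be_trans f2 f3).
Qed.

Lemma valid_seg n m : m <= n -> valid n (seg m).
Proof.
move=> h; rewrite seg_asc; case: m h => [|m] h //; apply: valid_asc => //; lia.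
Qed.

Lemma segSr M : 0 < M -> seg M.+1 = seg M ++ [:: (M, true)].
Proof. case: M => // M _; by rewrite !seg_asc /= ascSr add1n cats1. Qed.

Lemma I3 M k : k <= M -> 0 < M ->
  beq M.+1 (bpow (seg M.+1) k) (bpow (seg M) k ++ desc (M - k).+1 k).
Proof.
move=> + hM; elim: k => [|k IH] hk.
  by rewrite /=; apply: be_refl.
have IH' := IH (ltnW hk).
have -> : bpow (seg M.+1) k.+1 = bpow (seg M.+1) k ++ (seg M ++ [:: (M, true)]) by rewrite bpowSr segSr.
have vs : valid M.+1 (seg M ++ [:: (M, true)]).
  by rewrite valid_cat valid_seg // /valid /=; lia.
apply: be_trans (beq_r IH' vs) _.
have eK := K k (_ : 0 < M - k); have ea : M - k + k = M by lia.
rewrite ea in eK; have ed : (M - k.+1).+1 = M - k by lia.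
rewrite ed bpowSr -!catA; apply: beq_l; last first.
  apply: valid_bpow; apply: valid_seg; lia.
apply: eK; lia.
Qed.

Lemma DD q : beq q (bpow (desc 1 q.-1) q) (bpow (seg q) q).
Proof.
elim: q => [|q IH]; first by apply: be_refl.
case: q IH => [|q] IH; first by apply: be_refl.
set d := desc 1 q.+1.
have I := I3 (leqnn q.+1) (ltn0Sn q); rewrite subnn in I.
have R := beq_rev I; rewrite rev_cat !rev_bpow /desc revK in R.
rewrite -/(desc 1 q.+1) -/d in R *.
have R' : beq q.+2 (bpow d q.+1) (seg q.+2 ++ bpow (desc 1 q.+1.-1) q.+1) := R.
have -> : bpow d q.+2 = bpow d q.+1 ++ d by rewrite bpowSr.
have vd : valid q.+2 d by apply: valid_desc => //; lia.
have vs : valid q.+2 (seg q.+2) by apply: valid_seg.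
apply: be_trans (beq_r R' vd) _.
rewrite -catA (bpowS (seg q.+2)); apply: beq_l vs.
apply: be_trans (beq_r (beq_mono (leqnSn _) IH) vd) _.
by apply: be_sym.
Qed.

Lemma Xid n b L : 0 < b -> b + L < n ->
  beq n (desc b L.+1 ++ desc b.+1 L) (desc b L ++ desc b L.+1).
Proof.
move=> hb hn.
have h := @Sw n b L (asc b L) hb hn (posw_asc _ _) _.
have h' : beq n (asc b L.+1 ++ asc b L) (sh 1 (asc b L) ++ asc b L.+1).
  apply: h; apply/allP => x /mapP[i]; rewrite mem_iota => /andP[h1 h2] -> /=; lia.
rewrite sh_asc addn1 in h'.
have := beq_rev h'; rewrite !rev_cat -/(desc b L.+1) -/(desc b L) -/(desc b.+1 L).
exact: be_sym.
Qed.

Lemma Xpow n b L j : 0 < b -> b + L < n ->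
  beq n (desc b L.+1 ++ bpow (desc b.+1 L) j) (bpow (desc b L) j ++ desc b L.+1).
Proof.
move=> hb hn; have vD : valid n (desc b L.+1) by apply: valid_desc => //; lia.
elim: j => [|j IH].
  by rewrite /= cats0; apply: be_refl.
have vc : valid n (desc b L) by apply: valid_desc => //; lia.
have vc' : valid n (bpow (desc b.+1 L) j) by apply: valid_bpow; apply: valid_desc => //; lia.
rewrite bpowS catA; apply: be_trans (beq_r (Xid hb hn) vc') _.
rewrite -catA (bpowS (desc b L)) -catA; exact: beq_l.
Qed.

Definition cc (q M : nat) : bword := desc (M - q).+1 q.-1.

Lemma step q M W j : 0 < q -> q <= M -> valid M W ->
  markov M.+1 (W ++ bpow (seg M.+1) q ++ bpow (cc q M.+1) j)
         M (W ++ bpow (seg M) q ++ bpow (cc q M) j.+1).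
Proof.
move=> hq hqM hW.
set b := (M - q).+1; set L := q.-1.
have eq1 : q = L.+1 by rewrite /L; lia.
have ecc' : cc q M.+1 = desc b.+1 L by rewrite /cc /b /L; congr desc; lia.
have ecc : cc q M = desc b L by [].
have eD : desc (M - q).+1 q = (M, true) :: desc b L.
  have -> : desc (M - q).+1 q = desc b L.+1 by rewrite -eq1.
  by rewrite descS /b /L; congr (_ :: _); congr (_, _); lia.
have hM : 0 < M by lia.
have vW' : valid M.+1 W by apply: valid_mono hW.
have vC' : valid M.+1 (bpow (cc q M.+1) j).
  rewrite ecc'; apply: valid_bpow; apply: valid_desc; rewrite /b /L; lia.
have e1 := beq_ctx (I3 hqM hM) vW' vC'.
have e2 : beq M.+1 (W ++ (bpow (seg M) q ++ desc (M - q).+1 q) ++ bpow (cc q M.+1) j)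
                   (W ++ bpow (seg M) q ++ (bpow (cc q M) j ++ desc (M - q).+1 q)).
  rewrite -catA; apply: beq_l; last exact: vW'; apply: beq_l.
    rewrite ecc' ecc; have -> : desc (M - q).+1 q = desc b L.+1 by rewrite -eq1.
    apply: Xpow; rewrite /b; lia.
  apply: valid_bpow; apply: valid_seg; lia.
have m1 := beq_markov (be_trans e1 e2).
apply: mk_trans m1 _.
rewrite eD.
have vc : valid M (cc q M) by rewrite ecc; apply: valid_desc; rewrite /b /L; lia.
set X := W ++ bpow (seg M) q ++ bpow (cc q M) j.
have vX : valid M X.
  rewrite /X !valid_cat hW valid_bpow ?valid_seg //; exact: valid_bpow.
have -> : W ++ bpow (seg M) q ++ bpow (cc q M) j ++ (M, true) :: desc b L
          = (rcons X (M, true)) ++ cc q M by rewrite /X -cats1 -!catA.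
have vXc : valid M (cc q M ++ X) by rewrite valid_cat vc vX.
have c1 : markov M.+1 (rcons X (M, true) ++ cc q M) M.+1 (cc q M ++ rcons X (M, true)).
  apply: mk_conj; rewrite valid_cat -cats1 valid_cat (valid_mono (leqnSn _) vc).
  rewrite (valid_mono (leqnSn _) vX) /valid /=; lia.
have c2 : markov M (cc q M ++ X) M.+1 (rcons (cc q M ++ X) (M, true)).
  exact: mk_stab.
rewrite rcons_cat in c2.
have c3 : markov M (cc q M ++ X) M (X ++ cc q M) by exact: mk_conj.
apply: mk_trans c1 (mk_trans (mk_sym c2) _).
by rewrite bpowSr /X -!catA in c3 *.
Qed.

Lemma Lrem q N W : 0 < q -> q <= N -> valid N W ->
  markov (N + q) (W ++ bpow (seg (N + q)) q) N
         (W ++ bpow (seg N) q ++ bpow (cc q N) q).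
Proof.
move=> hq hqN hW.
suff H : forall d, d <= q -> markov (N + q) (W ++ bpow (seg (N + q)) q) (N + q - d)
           (W ++ bpow (seg (N + q - d)) q ++ bpow (cc q (N + q - d)) d).
  by have := H q (leqnn q); rewrite addnK.
elim=> [|d IH] hd.
  by rewrite subn0 /= cats0; apply: mk_refl.
apply: mk_trans (IH (ltnW hd)) _.
have e : N + q - d = (N + q - d.+1).+1 by lia.
rewrite e; apply: step => //; first lia.
apply: valid_mono hW; lia.
Qed.

Lemma inb_sh lo hi k w : inb lo hi w -> inb (lo + k) (hi + k) (sh k w).
Proof. move=> h; rewrite /inb /sh all_map; apply: sub_all h => x /andP[a b] /=; apply/andP; lia. Qed.
Lemma inb_bpow lo hi w k : inb lo hi w -> inb lo hi (bpow w k).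
Proof. move=> h; elim: k => [|k IH] //; rewrite bpowS /inb all_cat; apply/andP; split => //. Qed.

Definition Xd q := bpow (desc 1 q.-1) q.

Lemma shiftdown q N g : 0 < q -> valid q g -> forall t, t.+1 * q <= N ->
  markov N (g ++ bpow (seg N) q ++ sh (t * q) (Xd q)) N (g ++ bpow (seg N) q ++ Xd q).
Proof.
move=> hq hg; have iX : inb 1 q.-1 (Xd q).
  apply: inb_bpow; have := inb_desc 1 q.-1; by rewrite add1n.
have pX : posw (Xd q) by apply: posw_bpow; exact: posw_desc.
elim=> [|t IH] ht.
  by rewrite mul0n sh0; apply: mk_refl.
have hN : 2 <= N by rewrite mulSn in ht; lia.
set P := bpow (seg N) q.
set Y := sh (t * q) (Xd q).
have eZ : sh (t.+1 * q) (Xd q) = sh q Y by rewrite /Y sh_sh mulSn addnC.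
rewrite eZ.
have iY : inb (1 + t * q) (q.-1 + t * q) Y by exact: inb_sh.
have iZ : inb (1 + t * q + q) (q.-1 + t * q + q) (sh q Y) by exact: inb_sh.
have vP : valid N P by apply: valid_bpow; apply: valid_seg.
have vg : valid N g by apply: valid_mono hg; lia.
have vZ : valid N (sh q Y) by apply: valid_inb iZ; rewrite mulSn in ht; lia.
have vY : valid N Y by apply: valid_inb iY; rewrite mulSn in ht; lia.
have c1 : markov N ((g ++ P) ++ sh q Y) N (sh q Y ++ g ++ P).
  by apply: mk_conj; rewrite !valid_cat vg vP vZ.
rewrite catA; apply: mk_trans c1 _.
have e1 : beq N ((sh q Y ++ g) ++ P) ((g ++ sh q Y) ++ P).
  apply: beq_r vP; apply: comm_ww => //.
  apply: far_inb iZ (_ : inb 0 q.-1 g) _.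
    apply: sub_all hg => x /andP[a b]; apply/andP; lia.
  apply/orP; right; rewrite mulSn in ht; lia.
have e2 : beq N (g ++ P ++ Y) (g ++ sh q Y ++ P).
  apply: beq_l vg; rewrite /P seg_asc.
  have -> : N.-1 = (N - 2).+1 by lia.
  apply: Sp => //; first lia.
    by rewrite /Y posw_sh.
  apply: sub_all iY => x /andP[a b]; apply/andP; rewrite mulSn in ht; lia.
rewrite -!catA in e1.
apply: mk_trans (beq_markov (be_trans e1 (be_sym e2))) _.
apply: IH; rewrite mulSn in ht *; lia.
Qed.

Lemma assembly q : 0 < q -> forall k g, 0 < k -> valid q g ->
  markov (k * q) (g ++ bpow (seg (k * q)) q) q (g ++ bpow (seg q) (k * q)).
Proof.
move=> hq; elim=> [|k IH] g // _ hg.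
case: k IH => [|k] IH.
  by rewrite mul1n; apply: mk_refl.
set N := k.+1 * q.
have eN : k.+2 * q = N + q by rewrite /N mulSn addnC.
have hqN : q <= N by rewrite /N mulSn; lia.
have vgN : valid N g by apply: valid_mono hg.
rewrite eN.
have m1 := Lrem hq hqN vgN.
have ecc : bpow (cc q N) q = sh (k * q) (Xd q).
  rewrite /Xd sh_bpow sh_desc /cc; congr (bpow (desc _ _) _); rewrite /N mulSn; lia.
rewrite ecc in m1; apply: mk_trans m1 _.
have m2 := shiftdown hq hg (leqnn (k.+1 * q)); rewrite -/N in m2.
apply: mk_trans m2 _.
set D := bpow (seg q) q.
have vD : valid N D by apply: valid_bpow; apply: valid_seg.
have vP : valid N (bpow (seg N) q) by apply: valid_bpow; apply: valid_seg.
have m3 : markov N (g ++ bpow (seg N) q ++ Xd q) N (g ++ bpow (seg N) q ++ D).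
  apply: beq_markov; rewrite !catA; apply: beq_l; first exact: beq_mono hqN (DD q).
  by rewrite valid_cat vgN.
apply: mk_trans m3 _.
have m4 : markov N ((g ++ bpow (seg N) q) ++ D) N (D ++ g ++ bpow (seg N) q).
  by apply: mk_conj; rewrite !valid_cat vgN vP vD.
rewrite catA; apply: mk_trans m4 _.
have vDg : valid q (D ++ g) by rewrite valid_cat hg valid_bpow // valid_seg.
have m5 := IH (D ++ g) isT vDg; rewrite -/N -catA in m5.
apply: mk_trans m5 _.
have m6 : markov q (D ++ (g ++ bpow (seg q) N)) q ((g ++ bpow (seg q) N) ++ D).
  apply: mk_conj; rewrite !valid_cat hg !valid_bpow ?valid_seg //.
rewrite -catA; apply: mk_trans m6 _.
by rewrite -catA bpow_add; apply: mk_refl.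
Qed.

Lemma sorted_last (s : seq nat) : sorted leq s -> all (fun x => x <= last 0 s) s.
Proof.
case: s => [|x s] //= hp.
elim: s x hp => [|y s IH] x /=; first by rewrite leqnn.
move=> /andP[hxy hp]; have := IH y hp => /= /andP[hy hs].
by rewrite hy hs (leq_trans hxy hy).
Qed.

Lemma sorted_rcons_inv (s : seq nat) x : sorted leq (rcons s x) -> sorted leq s.
Proof. case: s => [|y s] //=; rewrite rcons_path; by case/andP. Qed.

Lemma valid_Tword n L : all (fun p : nat * nat => p.1 <= n) L -> valid n (Tword L).
Proof.
elim: L => [|p L IH] //= /andP[h hL].
rewrite valid_cat IH // andbT; apply: valid_bpow; exact: valid_seg.
Qed.

Lemma Tword_rcons L p : Tword (rcons L p) = Tword L ++ bpow (seg p.1) p.2.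
Proof. by rewrite /Tword map_rcons flatten_rcons. Qed.
Lemma Tstrands_rcons L p : Tstrands (rcons L p) = p.1.
Proof. by rewrite /Tstrands map_rcons last_rcons. Qed.

Theorem corollary3p2 :
  (forall (a s r : nat) (gamma : bword),
      (0 < a)%N -> (a <= s)%N -> (s <= r)%N -> (s %| r)%N -> valid a gamma ->
      markov r (gamma ++ bpow (seg r) s) s (gamma ++ bpow (seg s) r))
  /\
  (forall (L : seq (nat * nat)) (rk sk : nat),
      Tdata (rcons L (rk, sk)) ->
      (Tstrands L <= sk)%N -> (sk <= rk)%N -> (sk %| rk)%N ->
      markov (Tstrands (rcons L (rk, sk))) (Tword (rcons L (rk, sk)))
             (Tstrands (rcons L (sk, rk))) (Tword (rcons L (sk, rk)))).
Proof.
have P1 : forall (a s r : nat) (gamma : bword),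
      (0 < a)%N -> (a <= s)%N -> (s <= r)%N -> (s %| r)%N -> valid a gamma ->
      markov r (gamma ++ bpow (seg r) s) s (gamma ++ bpow (seg s) r).
  move=> a s r g ha has hsr hdiv hg.
  have hs : 0 < s by lia.
  have hk : 0 < r %/ s by rewrite divn_gt0.
  have := assembly hs hk (valid_mono has hg); by rewrite divnK.
split=> // L rk sk /and3P[_ hsort hall] hL hsr hdiv.
rewrite !Tstrands_rcons !Tword_rcons /=.
have hsk : 0 < sk by move: hall; rewrite all_rcons => /andP[/andP[_ h] _].
apply: (P1 sk) => //.
apply: valid_Tword.
move: hsort; rewrite map_rcons => /sorted_rcons_inv /sorted_last.
rewrite all_map => h; apply: sub_all h => p /= h; apply: leq_trans h hL.
Qed.
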